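(* Let $T\ge 1$ be an integer and let $v>0$, $c>0$, $k>0$, $\beta\in(0,1]$ with $kT<v$, and suppose $(1-\beta)c>\beta k$. Let $\varrho:=\lceil (1-\beta)c/(\beta k)\rceil$. Consider the stopping problem on times $\{0,1,\dots,T\}$ in which, from the perspective of time $t$, stopping at time $t+j$ ($0\le j\le T-t$) has value $\beta v-c$ if $j=0$ and $\beta(v-jk-c)$ if $j\ge1$. A (pure) strategy is a map $\sigma:\{0,\dots,T\}\to\{0,1\}$ with $\sigma(T)=1$ ($1$ = stop, $0$ = continue); for $t<T$ let $\tau_\sigma(t)=\min\{s>t:\sigma(s)=1\}$. Define: - the naive strategy $\sigma_0$: $\sigma_0(T)=1$ and for $t<T$, $\sigma_0(t)=1$ iff $\beta v-c\ge \max_{1\le j\le T-t}\beta(v-jk-c)$; - the update $\sigma\mapsto\sigma'$: $\sigma'(T)=1$ and for $t<T$, $\sigma'(t)=1$ iff $\beta v-c\ge \beta\big(v-(\tau_\sigma(t)-t)k-c\big)$; set $\sigma_{n+1}=\sigma_n'$ for $n\ge0$; - the sophisticated strategy $\sigma_S$: $\sigma_S(T)=1$ and, backward for $t=T-1,\dots,0$, $\sigma_S(t)=1$ iff $\beta v-c\ge\beta\big(v-(\tau_{\sigma_S}(t)-t)k-c\big)$. Then $\varrho\ge 2$, and $\sigma_n=\sigma_S$ for $n=2\big(\lceil (T+1)/\varrho\rceil-1\big)$; that is, the naive strategy is turned into the sophisticated one after $2(\lceil (T+1)/\varrho\rceil-1)$ rounds of training.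
   Context: This is the present-biased optimal stopping problem with immediate cost: stopping immediately costs $c$ now while the reward $v$ is received later (discounted by $\beta$); stopping $j\ge1$ periods later discounts both cost and reward by $\beta$ and reduces the reward by $jk$. The problem is state-independent, so strategies depend only on time. Ties are broken in favour of stopping. In each training round the agent at time $t$ chooses whether to stop now, taking as given that from time $t+1$ on she follows the previous round's strategy. *)

(* Defs.v *)
From HB Require Import structures.
From mathcomp Require Import all_boot all_order all_algebra.
From mathcomp Require Import reals.
Set Implicit Arguments. Unset Strict Implicit. Unset Printing Implicit Defensive.
Import Order.TTheory GRing.Theory Num.Theory.
Local Open Scope ring_scope.

(* A (pure) strategy: time -> stop (true) / continue (false); only times
   0..T matter, and all strategies below have sigma t = true for t >= T. *)
Definition strategy := nat -> bool.

Section Stopping.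
Variables (R : realType) (T : nat) (v c k beta : R).

Definition stop_value (j : nat) : R :=
  if j == 0%N then beta * v - c else beta * (v - j%:R * k - c).

(* tau_sigma(t) = min { s > t : sigma s }, searched in (t, T]
   (exists since sigma T = true for all strategies considered) *)
Definition tau (sigma : strategy) (t : nat) : nat :=
  (t.+1 + find sigma (iota t.+1 (T - t)))%N.

Definition naive : strategy := fun t =>
  if (T <= t)%N then true
  else all (fun j => stop_value j <= stop_value 0) (iota 1 (T - t)).

Definition update (sigma : strategy) : strategy := fun t =>
  if (T <= t)%N then true
  else stop_value (tau sigma t - t) <= stop_value 0.

Definition sigma_n (n : nat) : strategy := iter n update naive.

(* sophisticated strategy by backward induction:
   soph_list m = [:: sigma_S (T-m); ...; sigma_S T] *)
Fixpoint soph_list (m : nat) : seq bool :=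
  match m with
  | 0 => [:: true]
  | m'.+1 =>
      let s := soph_list m' in
      (stop_value (find id s).+1 <= stop_value 0) :: s
  end.

Definition sophisticated : strategy := fun t => nth true (soph_list T) t.

End Stopping.

(* Main.v *)
Require Import Defs.
From HB Require Import structures.
From mathcomp Require Import all_boot all_order all_algebra.
From mathcomp Require Import reals.
From mathcomp Require Import zify.
Import Order.TTheory GRing.Theory Num.Theory.
From mathcomp Require Import ring lra.

Definition Eb (r m d : nat) := has (fun j => d == j * r) (iota 0 m.+1).
Definition Ob (r m d : nat) := Eb r m d || (m.+1 * r <= d).

Lemma EbP r m d : reflect (exists j, j <= m /\ d = j * r) (Eb r m d).
Proof.
apply: (iffP hasP) => [[j]|[j [jm ->]]].
  by rewrite mem_iota add0n ltnS => /andP[_ jm] /eqP ->; exists j.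
by exists j => //; rewrite mem_iota add0n ltnS jm.
Qed.

Lemma find_has_all (T0 : Type) (p : pred T0) s n : has p s ->
  (n <= find p s) = all (predC p) (take n s).
Proof.
elim: s n => [|x s IH] [|n] //=; case: (p x) => //= Hs.
by rewrite ltnS IH.
Qed.

Lemma nomid r j j0 : 0 < r -> j * r < j0 * r -> j * r + r <= j0 * r.
Proof.
move=> r0; rewrite ltn_pmul2r // => jj0.
by rewrite addnC -mulSn leq_mul2r jj0 orbT.
Qed.

Lemma witness r M d : 0 < r -> 0 < d -> d <= M * r ->
  (forall j, j <= M -> d != j * r) ->
  exists j, j < M /\ d < j * r + r /\ j * r < d.
Proof.
move=> r0 d0 dM nE.
set j := d.-1 %/ r.
have e := divn_eq d.-1 r; have lt := ltn_pmod d.-1 r0.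
rewrite -/j in e.
have jr : j * r < d by lia.
have jM : j < M by rewrite -(ltn_pmul2r r0); apply: (leq_trans jr dM).
exists j; split => //; split => //.
have := nE j.+1 jM; rewrite mulSn => /eqP ne. move: e lt; set q := d.-1 %% r; set p := j * r => e lt; lia.
Qed.

Lemma update_all (R : realType) T (v c k beta : R) r (s : strategy) t :
  (forall j, 0 < j -> (stop_value v c k beta j <= stop_value v c k beta 0)%R = (r <= j)) ->
  0 < r -> s T -> t < T ->
  update T v c k beta s t = all (predC s) (iota t.+1 r.-1).
Proof.
move=> Hsv r0 sT tT.
rewrite /update leqNgt tT /= /tau.
have hs : has s (iota t.+1 (T - t)) by apply/hasP; exists T => //; rewrite mem_iota; lia.
have -> : t.+1 + find s (iota t.+1 (T - t)) - t = (find s (iota t.+1 (T - t))).+1 by lia.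
rewrite Hsv // -[r in (r <= _)]prednK // ltnS (@find_has_all _ _ _ r.-1 hs) take_iota.
case: (leqP r.-1 (T - t)) => h //.
have f : forall n, T - t <= n -> all (predC s) (iota t.+1 n) = false.
  move=> n hn; have hm : T \in iota t.+1 n by rewrite mem_iota; lia.
  by apply/negbTE/negP => /allP /(_ T hm); rewrite /= sT.
by rewrite !f //; lia.
Qed.

Lemma stepE T r m (s : strategy) : 2 <= r ->
  (forall u, s u = if T <= u then true else Eb r m (T - u)) ->
  forall t, t < T -> all (predC s) (iota t.+1 r.-1) = Ob r m (T - t).
Proof.
move=> r2 Hs t tT; have r0 : 0 < r by lia.
apply/idP/idP.
- move=> /allP H; apply/negPn/negP.
  rewrite /Ob negb_or -ltnNge => /andP[nE dlt].
  have [j [jM [h1 h2]]] : exists j, j < m.+1 /\ T - t < j * r + r /\ j * r < T - t.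
    apply: witness => //; [lia | exact: ltnW|].
    move=> j jm; case: (ltnP j m.+1) => jm'.
      by apply/eqP => e; move/EbP: nE; apply; exists j; split; [lia|].
    have -> : j = m.+1 by lia.
    by rewrite neq_ltn dlt.
  have hm : T - j * r \in iota t.+1 r.-1 by rewrite mem_iota; lia.
  move: (H _ hm); rewrite /= Hs; case: ifP => // _.
  have -> : T - (T - j * r) = j * r by lia.
  by apply/negP; apply/negPn/EbP; exists j; split => //; lia.
- move=> HO; apply/allP => u; rewrite mem_iota => /andP[u1 u2]; rewrite /= Hs.
  case: leqP => Tu.
    exfalso; case/orP: HO => [/EbP [j0 [_ e]]|h].
      by case: j0 e => [|j0] e; rewrite ?mul0n ?mulSn in e; lia.
    by rewrite mulSn in h; lia.
  apply/EbP => [[j [jm e]]]; case/orP: HO => [/EbP [j0 [j0m e0]]|h].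
    have := @nomid r j j0 r0; rewrite -e -e0; lia.
  have : j * r <= m * r by rewrite leq_mul2r jm orbT.
  by rewrite mulSn in h; lia.
Qed.

Lemma stepO T r m (s : strategy) : 2 <= r ->
  (forall u, s u = if T <= u then true else Ob r m (T - u)) ->
  forall t, t < T -> all (predC s) (iota t.+1 r.-1) = Eb r m.+1 (T - t).
Proof.
move=> r2 Hs t tT; have r0 : 0 < r by lia.
apply/idP/idP.
- move=> /allP H; apply/negPn/negP => nE.
  case: (leqP (T - t) (m.+1 * r)) => dle.
    have [j [jM [h1 h2]]] : exists j, j < m.+1 /\ T - t < j * r + r /\ j * r < T - t.
      apply: witness => //; first lia.
      by move=> j jm; apply/eqP => e; move/EbP: nE; apply; exists j.
    have hm : T - j * r \in iota t.+1 r.-1 by rewrite mem_iota; lia.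
    move: (H _ hm); rewrite /= Hs; case: ifP => // _.
    have -> : T - (T - j * r) = j * r by lia.
    by rewrite /Ob; apply/negP; apply/negPn/orP; left; apply/EbP; exists j; split => //; lia.
  have hm : t.+1 \in iota t.+1 r.-1 by rewrite mem_iota; lia.
  move: (H _ hm); rewrite /= Hs; case: ifP => // _.
  by rewrite /Ob; apply/negP; apply/negPn/orP; right; lia.
- move=> /EbP [j0 [j0m e0]]; apply/allP => u; rewrite mem_iota => /andP[u1 u2]; rewrite /= Hs.
  case: leqP => Tu.
    by exfalso; case: j0 e0 {j0m} => [|j0] e; rewrite ?mul0n ?mulSn in e; lia.
  rewrite /Ob negb_or -ltnNge; apply/andP; split.
    apply/EbP => [[j [jm e]]].
    have := @nomid r j j0 r0; rewrite -e -e0; lia.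
  have : j0 * r <= m.+1 * r by rewrite leq_mul2r j0m orbT.
  lia.
Qed.

Set Implicit Arguments.
Section Main.
Lemma upd_char (R : realType) T (v c k beta : R) r (s : strategy) (P Q : nat -> bool) :
  (forall j, 0 < j -> (stop_value v c k beta j <= stop_value v c k beta 0)%R = (r <= j)) ->
  0 < r ->
  (forall u, s u = if T <= u then true else P (T - u)) ->
  (forall t, t < T -> all (predC s) (iota t.+1 r.-1) = Q (T - t)) ->
  forall t, update T v c k beta s t = if T <= t then true else Q (T - t).
Proof.
move=> Hsv r0 Hs HQ t; case: leqP => tT; first by rewrite /update tT.
rewrite (@update_all _ _ _ _ _ _ _ _ _ Hsv) //; first exact: HQ.
by rewrite Hs leqnn.
Qed.

Lemma base_char (R : realType) T (v c k beta : R) r :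
  (forall j, 0 < j -> (stop_value v c k beta j <= stop_value v c k beta 0)%R = (r <= j)) ->
  2 <= r ->
  forall t, naive T v c k beta t = if T <= t then true else Eb r 0 (T - t).
Proof.
move=> Hsv r2 t; rewrite /naive; case: leqP => // tT.
have -> : T - t = (T - t).-1.+1 by lia.
rewrite /= Hsv // (leqNgt r 1) (leq_trans _ r2) //.
Qed.

Lemma iter_char (R : realType) T (v c k beta : R) r :
  (forall j, 0 < j -> (stop_value v c k beta j <= stop_value v c k beta 0)%R = (r <= j)) ->
  2 <= r -> forall m,
  (forall t, sigma_n T v c k beta m.*2 t = if T <= t then true else Eb r m (T - t)) /\
  (forall t, sigma_n T v c k beta m.*2.+1 t = if T <= t then true else Ob r m (T - t)).
Proof.
move=> Hsv r2; have r0 : 0 < r by lia.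
have hO : forall m, (forall t, sigma_n T v c k beta m.*2 t = if T <= t then true else Eb r m (T - t)) ->
  (forall t, sigma_n T v c k beta m.*2.+1 t = if T <= t then true else Ob r m (T - t)).
  move=> m H; apply: (upd_char _ _ _ _ _ _ _ _ _ _ Hsv r0 H); exact: stepE.
elim=> [|m [_ IH]].
  have H0 : forall t, sigma_n T v c k beta 0.*2 t = if T <= t then true else Eb r 0 (T - t) := base_char _ _ _ _ _ _ _ Hsv r2.
  by split; [exact: H0 | exact: hO H0].
have H : forall t, sigma_n T v c k beta m.+1.*2 t = if T <= t then true else Eb r m.+1 (T - t).
  apply: (upd_char _ _ _ _ _ _ _ _ _ _ Hsv r0 IH); exact: stepO.
split => //; exact: hO.
Qed.

Lemma modS_le r m : 0 < r -> (r <= (m %% r).+1) = (r %| m.+1).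
Proof.
move=> r0; have := modnS m r; case: (boolP (r %| m.+1)) => h e.
  have h2 : (m %% r).+1 + m %/ r * r = m.+1 by rewrite addSn addnC -divn_eq.
  have : r %| (m %% r).+1 by rewrite -(dvdn_addl _ (dvdn_mull (m %/ r) (dvdnn r))) h2.
  by move/dvdn_leq; apply.
by rewrite leqNgt -e ltn_pmod.
Qed.

Lemma soph_char (R : realType) (v c k beta : R) r :
  (forall j, 0 < j -> (stop_value v c k beta j <= stop_value v c k beta 0)%R = (r <= j)) ->
  0 < r -> forall m,
  find id (soph_list v c k beta m) = m %% r /\
  forall i, i <= m -> nth true (soph_list v c k beta m) i = (r %| (m - i)).
Proof.
move=> Hsv r0; elim=> [|m [IHf IHn]].
  split; first by rewrite mod0n.
  by case=> // _; rewrite dvdn0.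
rewrite /= IHf Hsv // modS_le //; split.
  by rewrite modnS; case: (r %| m.+1).
by case=> [|i] hi //=; rewrite IHn.
Qed.

Lemma Eb_dvd r M d : 0 < r -> d <= M -> Eb r (M %/ r) d = (r %| d).
Proof.
move=> r0 dM; apply/EbP/idP => [[j [_ ->]]|h]; first exact: dvdn_mull.
by exists (d %/ r); split; [exact: leq_div2r | rewrite divnK].
Qed.
End Main.

Local Open Scope ring_scope.

Theorem proposition5p1 (R : realType) (T : nat) (v c k beta : R) :
  (1 <= T)%N -> 0 < v -> 0 < c -> 0 < k -> 0 < beta -> beta <= 1 ->
  k * T%:R < v -> beta * k < (1 - beta) * c ->
  let rho : int := Num.ceil ((1 - beta) * c / (beta * k)) in
  (2 <= rho) /\
  let n : nat := `|(2 * (Num.ceil ((T.+1)%:R / rho%:~R : R) - 1))%R|%N in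
  forall t : nat, (t <= T)%N ->
    sigma_n T v c k beta n t = sophisticated T v c k beta t.
Proof.
move=> T1 v0 c0 k0 b0 b1 kT bk rho.
have bk0 : 0 < beta * k by rewrite mulr_gt0.
have x1 : 1 < (1 - beta) * c / (beta * k) by rewrite ltr_pdivlMr // mul1r.
have rho1 : 1 < rho by rewrite /rho ceil_gt_int.
have rho2 : 2 <= rho by lia.
split => //.
set r := `|rho|%N.
have rE : rho = r%:Z by rewrite /r; lia.
have r2 : (2 <= r)%N by lia.
have r0 : (0 < r)%N by lia.
clearbody r.
have Hsv : forall j, (0 < j)%N ->
    (stop_value v c k beta j <= stop_value v c k beta 0) = (r <= j)%N.
  move=> j j0; rewrite /stop_value eqxx (negbTE (_ : j != 0%N)); last by rewrite -lt0n.
  rewrite -lez_nat -rE /rho ceil_le_int -pmulrn ler_pdivrMr //.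
  by apply/idP/idP => h; lra.
move=> n.
have nE : n = (T %/ r).*2.
  have ce : Num.ceil ((T.+1)%:R / rho%:~R : R) = (T %/ r).+1%:Z.
    rewrite rE; apply: ceil_def.
    have -> : ((T %/ r).+1%:Z - 1) = (T %/ r)%:Z by lia.
    rewrite -!pmulrn ltr_pdivlMr ?ler_pdivrMr ?ltr0n // -!natrM ltr_nat ler_nat.
    have e := divn_eq T r; have lt := ltn_pmod T r0.
    apply/andP; split; lia.
  rewrite /n ce; lia.
move=> t tT; rewrite nE (proj1 (iter_char _ _ _ _ _ _ _ Hsv r2 (T %/ r))).
rewrite /sophisticated (proj2 (soph_char _ _ _ _ _ _ Hsv r0 T) t tT).
case: leqP => Tt.
  have -> : (T - t)%N = 0%N by apply/eqP; rewrite subn_eq0.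
  by rewrite dvdn0.
by rewrite Eb_dvd // leq_subr.
Qed.
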